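(* Let $G$ be a finite bipartite graph and let $H$ be a $2$-lift of $G$. Then for every $k\geq0$, $$m_k(G\cup G)\geq m_k(H),$$ where $G\cup G$ is the disjoint union of two copies of $G$. In particular, for every $t\geq0$, $M(G,t)^2\geq M(H,t)$.
   Context: $m_k(\cdot)$ denotes the number of matchings of size $k$ and $M(G,t)=\sum_k m_k(G)t^k$. A graph $H$ is a $2$-lift of $G$ if $V(H)=V(G)\times\{0,1\}$ and for every edge $(u,v)\in E(G)$ exactly one of the following holds: $((u,0),(v,0))$ and $((u,1),(v,1))$ are edges of $H$, or $((u,0),(v,1))$ and $((u,1),(v,0))$ are edges of $H$; and if $(u,v)\notin E(G)$ then none of these four pairs is an edge of $H$. *)

(* Defs.v *)
From mathcomp Require Import all_boot all_order all_algebra.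
Set Implicit Arguments. Unset Strict Implicit. Unset Printing Implicit Defensive.
Import Order.TTheory GRing.Theory Num.Theory.

Definition simple_graph (V : finType) (r : rel V) : Prop :=
  (forall x y, r x y = r y x) /\ (forall x, ~~ r x x).

Definition bipartite (V : finType) (r : rel V) : Prop :=
  exists c : V -> bool, forall x y, r x y -> c x != c y.

Definition is_edge (V : finType) (r : rel V) (E : {set V}) : bool :=
  [exists x, exists y, [&& x != y, r x y & E == [set x; y]]].

Definition matching (V : finType) (r : rel V) (M : {set {set V}}) : bool :=
  [forall E in M, is_edge r E] &&
  [forall E1 in M, forall E2 in M, (E1 != E2) ==> [disjoint E1 & E2]].

Definition mk (V : finType) (r : rel V) (k : nat) : nat :=
  #|[set M : {set {set V}} | matching r M && (#|M| == k)]|.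

(* Matching generating polynomial M(G,t) = sum_k m_k(G) t^k (m_k = 0 for k > |V|). *)
Definition matchpoly (R : numDomainType) (V : finType) (r : rel V) (t : R) : R :=
  (\sum_(k < #|V|.+1) (mk r k)%:R * t ^+ k)%R.

Definition dunion (V : finType) (r : rel V) : rel (V * bool) :=
  fun x y => r x.1 y.1 && (x.2 == y.2).

(* H is a 2-lift of G (vertex set V × {0,1}, with false = 0 and true = 1). *)
Definition two_lift (V : finType) (r : rel V) (h : rel (V * bool)) : Prop :=
  forall u v : V,
    let h00 := h (u, false) (v, false) in
    let h11 := h (u, true) (v, true) in
    let h01 := h (u, false) (v, true) in
    let h10 := h (u, true) (v, false) in
    if r u v then
      ([&& h00, h11, ~~ h01 & ~~ h10] || [&& h01, h10, ~~ h00 & ~~ h11])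
    else [&& ~~ h00, ~~ h11, ~~ h01 & ~~ h10].

(* Main.v *)
Require Import Defs.
From mathcomp Require Import all_boot all_order all_algebra.
Import Order.TTheory GRing.Theory Num.Theory.

Lemma edgeP {U : finType} {r : rel U} {E : {set U}} :
  is_edge r E -> exists x y, [/\ x != y, r x y & E = [set x; y]].
Proof. by case/existsP=> x /existsP [y /and3P [xy rxy /eqP ->]]; exists x, y. Qed.

Lemma edgeI (U : finType) (r : rel U) (x y : U) : x != y -> r x y -> is_edge r [set x; y].
Proof. by move=> xy rxy; apply/existsP; exists x; apply/existsP; exists y; rewrite xy rxy eqxx. Qed.

Lemma matchingP {U : finType} {r : rel U} {M : {set {set U}}} :
  matching r M ->
  (forall E, E \in M -> is_edge r E) /\
  (forall E1 E2, E1 \in M -> E2 \in M -> E1 != E2 -> [disjoint E1 & E2]).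
Proof.
case/andP=> /forall_inP H1 /forall_inP H2; split=> // E1 E2 h1 h2 ne.
by have /forall_inP /(_ _ h2) /implyP := H2 _ h1; apply.
Qed.

Lemma matchingI (U : finType) (r : rel U) (M : {set {set U}}) :
  (forall E, E \in M -> is_edge r E) ->
  (forall E1 E2, E1 \in M -> E2 \in M -> E1 != E2 -> [disjoint E1 & E2]) ->
  matching r M.
Proof.
move=> H1 H2; apply/andP; split; apply/forall_inP => // E1 h1.
by apply/forall_inP => E2 h2; apply/implyP; apply: H2.
Qed.

Lemma matching_card {U : finType} {r : rel U} {M : {set {set U}}} :
  matching r M -> #|M| <= #|U|.
Proof.
case/matchingP=> H1 H2.
have inj : {in M &, injective (fun E : {set U} => [pick x in E])}.
  move=> E1 E2 h1 h2 e.
  have := edgeP (H1 _ h1).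
  case=> x [y [_ _ E1d]].
  have : [pick z in E1] != None.
    by case: pickP => // /(_ x); rewrite E1d !inE eqxx.
  case: pickP e => [z zE1 e _|_ _]; last by rewrite eqxx.
  case: pickP e => [z' zE2 [ezz]|_ //]; subst z'.
  apply/eqP; apply: contraT => ne.
  by have := H2 _ _ h1 h2 ne; move/disjointFr => /(_ _ zE1); rewrite zE2.
rewrite -(card_in_imset inj).
have : (fun E : {set U} => [pick x in E]) @: M \subset [set~ None].
  apply/subsetP=> o /imsetP [E h ->]; rewrite !inE.
  have := edgeP (H1 _ h); case=> x [y [_ _ Ed]].
  by case: pickP => // /(_ x); rewrite Ed !inE eqxx.
by move/subset_leq_card; rewrite cardsC1 card_option.
Qed.

Lemma mp_sum (R : numDomainType) (U : finType) (r : rel U) (t : R) :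
  matchpoly r t = (\sum_(M | matching r M) t ^+ #|M|)%R.
Proof.
rewrite /matchpoly (partition_big (fun M : {set {set U}} => (inord #|M| : 'I_#|U|.+1)) xpredT) //=.
apply: eq_bigr => j _.
rewrite (eq_bigr (fun=> (t ^+ j)%R)); last first.
  by move=> M /andP [mM /eqP <-]; rewrite inordK // ltnS (matching_card mM).
rewrite (eq_bigl (mem [set M | matching r M && (#|M| == j)])); last first.
  move=> M; rewrite !inE; case mM: (matching r M) => //=.
  have lt := matching_card mM; rewrite -ltnS in lt.
  apply/eqP/eqP => [<-|e]; first by rewrite inordK.
  by apply: val_inj; rewrite /= inordK // e.
by rewrite sumr_const /mk mulr_natl.
Qed.

Lemma sum_inj_le (R : numDomainType) (I J : finType) (A : pred I) (B : pred J)
  (f : I -> J) (F : J -> R) :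
  {in A &, injective f} -> (forall i, A i -> B (f i)) -> (forall j, 0 <= F j)%R ->
  (\sum_(i | A i) F (f i) <= \sum_(j | B j) F j)%R.
Proof.
move=> inj AB F0.
rewrite -(big_imset _ inj) /= (bigID (mem [set f x | x in A]) B) /=.
rewrite -[X in (X <= _)%R]addr0 lerD ?sumr_ge0 //.
rewrite le_eqVlt; apply/orP; left; apply/eqP; apply: eq_bigl => j.
case: (boolP (j \in [set f x | x in A])) => [/imsetP [i Ai ->]|]; rewrite ?andbF ?andbT //.
by rewrite AB.
Qed.

Definition good_rho {V : finType} (M : {set {set V * bool}}) (rho : V -> bool) :=
  forall E, E \in M -> forall x y, x \in E -> y \in E -> x != y ->
    rho x.1 (+) rho y.1 = ~~ (x.2 (+) y.2).

Lemma in_pair_cases {T : finType} {p q x y : T} :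
  x \in [set p; q] -> y \in [set p; q] -> x != y -> (x = p /\ y = q) \/ (x = q /\ y = p).
Proof.
rewrite !inE => /orP[]/eqP-> /orP[]/eqP->; rewrite ?eqxx //; by auto.
Qed.

Lemma good_pair (V : finType) (rho : V -> bool) (p q : V * bool) :
  rho p.1 (+) rho q.1 = ~~ (p.2 (+) q.2) ->
  forall x y, x \in [set p; q] -> y \in [set p; q] -> x != y ->
    rho x.1 (+) rho y.1 = ~~ (x.2 (+) y.2).
Proof.
move=> H x y xE yE xy; case: (in_pair_cases xE yE xy) => -[-> ->] //.
by rewrite addbC H addbC.
Qed.

Definition upd {V : eqType} (rho : V -> bool) (u : V) (b : bool) :=
  fun w => if w == u then b else rho w.

Lemma good_upd (V : finType) (rho : V -> bool) (u : V) (b : bool) (E0 : {set V * bool}) :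
  (forall w, w \in E0 -> w.1 != u) ->
  (forall x y, x \in E0 -> y \in E0 -> x != y -> rho x.1 (+) rho y.1 = ~~ (x.2 (+) y.2)) ->
  (forall x y, x \in E0 -> y \in E0 -> x != y -> upd rho u b x.1 (+) upd rho u b y.1 = ~~ (x.2 (+) y.2)).
Proof.
move=> Hu H x y xE yE xy; rewrite /upd (negbTE (Hu _ xE)) (negbTE (Hu _ yE)); exact: H.
Qed.

Lemma fst_u (V : finType) (u : V) (a : bool) (w : V * bool) :
  w != (u, a) -> w != (u, ~~ a) -> w.1 != u.
Proof.
case: w => w1 w2 /= h1 h2; apply/eqP => e; subst w1; move: h1 h2.
by case: a; case: w2; rewrite ?eqxx.
Qed.

Lemma disj2 (T : finType) (y z : T) (A : {set T}) :
  y \notin A -> z \notin A -> [disjoint [set y; z] & A].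
Proof.
move=> hy hz; rewrite -setI_eq0; apply/eqP/setP => w; rewrite !inE.
case: (eqVneq w y) => [->|_]; first by rewrite (negbTE hy) andbF.
by case: (eqVneq w z) => [->|_]; rewrite ?(negbTE hz) ?andbF.
Qed.

Lemma KL (V : finType) n : forall (M : {set {set V * bool}}), #|M| <= n ->
  (forall E, E \in M -> exists x y, x != y /\ E = [set x; y]) ->
  (forall E1 E2, E1 \in M -> E2 \in M -> E1 != E2 -> [disjoint E1 & E2]) ->
  exists rho, good_rho M rho.
Proof.
elim: n => [|n IH] M cM He Hd.
  exists (fun=> false) => E; move: cM; rewrite leqn0 => /eqP/cards0_eq ->; by rewrite inE.
case: (set_0Vmem M) => [->|[E EM]].
  by exists (fun=> false) => E; rewrite inE.
have [x [y [xy Ed]]] := He E EM.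
case: x xy Ed => u a xy Ed.
set x' := (u, ~~ a).
have ax' : (u, a) != x' by rewrite /x' xpair_eqE eqxx /=; case: (a).
have uaE : (u, a) \in E by rewrite Ed !inE eqxx.
have yE : y \in E by rewrite Ed !inE eqxx orbT.
have disE : forall E0, E0 \in M -> E0 != E -> forall w, w \in E0 -> (w != (u, a)) && (w != y).
  move=> E0 E0M ne w wE0; have D := Hd _ _ E0M EM ne.
  apply/andP; split; apply: contraTneq wE0 => ->.
    by rewrite (disjointFl D uaE).
  by rewrite (disjointFl D yE).
have cME : #|M :\ E| <= n by move: cM; rewrite (cardsD1 E M) EM.
have subME : forall E0, E0 \in M :\ E -> (E0 != E) /\ (E0 \in M).
  by move=> E0; rewrite !inE => /andP[].
have goodE : forall rho : V -> bool, rho u (+) rho y.1 = ~~ (a (+) y.2) ->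
    forall x y0, x \in E -> y0 \in E -> x != y0 -> rho x.1 (+) rho y0.1 = ~~ (x.2 (+) y0.2).
  by move=> rho H; rewrite Ed; apply: good_pair.
case: (eqVneq y x') => [yx'|yx'].
  have [rho Hr] : exists rho, good_rho (M :\ E) rho.
    apply: IH => //.
      by move=> E0 /subME [_]; apply: He.
    by move=> E1 E2 /subME [_ h1] /subME [_ h2]; apply: Hd.
  exists rho => E0 E0M; case: (eqVneq E0 E) => [->|ne].
    by apply: goodE; rewrite yx' /= addbb; case: (a).
  by apply: Hr; rewrite !inE ne.
have yu : y.1 != u by apply: (@fst_u _ _ a); [rewrite eq_sym | exact: yx'].
case: (pickP (fun E2 => (E2 \in M) && (x' \in E2))) => [E2 /andP[E2M x'E2] | none].
  have x'E : x' \notin E by rewrite Ed !inE negb_or eq_sym ax' /= eq_sym yx'.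
  have E2E : E2 != E by apply: contraNneq x'E => <-.
  have [p [q [pq E2d]]] := He E2 E2M.
  have [z [zx' E2d']] : exists z, z != x' /\ E2 = [set x'; z].
    move: (x'E2); rewrite E2d !inE => /orP[]/eqP ex'.
      by exists q; rewrite ex' eq_sym.
    by exists p; rewrite ex' setUC.
  have zE2 : z \in E2 by rewrite E2d' !inE eqxx orbT.
  have DE2 := Hd _ _ E2M EM E2E.
  have yz : y != z by apply: contraTneq zE2 => <-; rewrite (disjointFl DE2 yE).
  have zu : z.1 != u.
    apply: (@fst_u _ _ a) => //.
    by apply: contraTneq zE2 => ->; rewrite (disjointFl DE2 uaE).
  have sub' : forall E0, E0 \in M :\ E :\ E2 -> [/\ E0 != E2, E0 != E & E0 \in M].
    by move=> E0; rewrite !inE => /and3P[].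
  have newdis : forall E3, E3 \in M :\ E :\ E2 -> [disjoint [set y; z] & E3].
    move=> E3 /sub' [ne2 ne1 E3M]; apply: disj2.
      by rewrite (disjointFl (Hd _ _ E3M EM ne1) yE).
    by rewrite (disjointFl (Hd _ _ E3M E2M ne2) zE2).
  have [rho Hr] : exists rho, good_rho ([set y; z] |: (M :\ E :\ E2)) rho.
    apply: IH.
    - rewrite cardsU1; move: cM; rewrite (cardsD1 E M) EM (cardsD1 E2 (M :\ E)) !inE E2E E2M /=.
      move=> h; apply: leq_trans (leq_add (leq_b1 _) (leqnn _)) _.
      by move: h; rewrite add1n ltnS.
    - move=> E0; rewrite in_setU1 => /orP[/eqP->|]; first by exists y, z.
      by case/sub' => _ _; apply: He.
    - move=> E1 E3; rewrite !in_setU1 => /orP[/eqP->|h1] /orP[/eqP->|h3]; first by rewrite eqxx.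
      + by move=> _; apply: newdis.
      + by move=> _; rewrite disjoint_sym; apply: newdis.
      + by case/sub': h1 => _ _ h1; case/sub': h3 => _ _ h3; apply: Hd.
  exists (upd rho u (rho y.1 (+) ~~ (a (+) y.2))) => E0 E0M.
  have Hyz : rho y.1 (+) rho z.1 = ~~ (y.2 (+) z.2).
    by apply: (Hr [set y; z]) => //; rewrite ?setU11 // !inE eqxx ?orbT.
  case: (eqVneq E0 E) => [->|ne].
    by apply: goodE; rewrite /upd eqxx (negbTE yu) addbAC addbb.
  case: (eqVneq E0 E2) => [->|ne2].
    rewrite E2d'; apply: good_pair; rewrite /upd /x' /= eqxx (negbTE zu).
    by move: Hyz; case: (rho y.1); case: (rho z.1); case: (a); case: (y.2); case: (z.2).
  apply: good_upd; last by apply: Hr; rewrite in_setU1 !inE ne ne2 E0M orbT.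
  move=> w wE0; apply: (@fst_u _ _ a).
    by case/andP: (disE _ E0M ne w wE0).
  by apply: contraTneq wE0 => ->; rewrite (disjointFl (Hd _ _ E0M E2M ne2) x'E2).
have [rho Hr] : exists rho, good_rho (M :\ E) rho.
  apply: IH => //.
    by move=> E0 /subME [_]; apply: He.
  by move=> E1 E2 /subME [_ h1] /subME [_ h2]; apply: Hd.
exists (upd rho u (rho y.1 (+) ~~ (a (+) y.2))) => E0 E0M.
case: (eqVneq E0 E) => [->|ne].
  by apply: goodE; rewrite /upd eqxx (negbTE yu) addbAC addbb.
apply: good_upd; last by apply: Hr; rewrite !inE ne.
move=> w wE0; have /andP [w1 _] := disE _ E0M ne w wE0.
apply: fst_u w1 _; apply: contraTneq wE0 => ->.
by have := none E0; rewrite E0M /= => ->.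
Qed.

Lemma lift_g {V : finType} {g : rel V} {h : rel (V * bool)} :
  two_lift g h -> forall x y, h x y -> g x.1 y.1.
Proof.
move=> Hl [u a] [v b] /=; move: (Hl u v) => /=.
case: (g u v) => //; case: a; case: b => /=;
case: (h (u,false) (v,false)); case: (h (u,true) (v,true));
case: (h (u,false) (v,true)); case: (h (u,true) (v,false)) => //.
Qed.

Lemma lift_cross {V : finType} {g : rel V} {h : rel (V * bool)} :
  two_lift g h -> forall x y, h x y -> h (x.1, false) (y.1, true) = x.2 (+) y.2.
Proof.
move=> Hl [u a] [v b] /=; move: (Hl u v) => /=.
case: (g u v) => //; case: a; case: b => /=;
case: (h (u,false) (v,false)); case: (h (u,true) (v,true));
case: (h (u,false) (v,true)); case: (h (u,true) (v,false)) => //.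
Qed.

Definition proj {V : finType} (E : {set V * bool}) : {set V} := [set w.1 | w in E].
Definition projset {V : finType} (M : {set {set V * bool}}) := [set proj E | E in M].
Definition goodV {V : finType} (h : rel (V * bool)) (P : {set {set V}}) (s : {ffun V -> bool}) : bool :=
  [forall F in P, forall u in F, forall v in F, (u != v) ==> (s u (+) s v == h (u, false) (v, true))].
Definition sig {V : finType} (h : rel (V * bool)) (M : {set {set V * bool}}) : {ffun V -> bool} :=
  odflt [ffun => false] [pick s | goodV h (projset M) s].
Definition sw {V : finType} (s : {ffun V -> bool}) (w : V * bool) : V * bool := (w.1, w.2 (+) s w.1).
Definition swset {V : finType} (s : {ffun V -> bool}) (E : {set V * bool}) := sw s @: E.
Definition Phi {V : finType} (h : rel (V * bool)) (M : {set {set V * bool}}) : {set {set V * bool}} :=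
  swset (sig h M) @: M.

Lemma sw_inv (V : finType) (s : {ffun V -> bool}) : involutive (sw s).
Proof. by case=> u a; rewrite /sw /= addbK. Qed.

Lemma sw_inj (V : finType) (s : {ffun V -> bool}) : injective (sw s).
Proof. exact: (inv_inj (@sw_inv V s)). Qed.

Lemma proj_sw (V : finType) (s : {ffun V -> bool}) (E : {set V * bool}) :
  proj (sw s @: E) = proj E.
Proof. by rewrite /proj -imset_comp; apply: eq_imset. Qed.

Lemma projset_Phi (V : finType) (h : rel (V * bool)) M : projset (Phi h M) = projset M.
Proof. by rewrite /projset /Phi -imset_comp; apply: eq_imset => E /=; rewrite /swset proj_sw. Qed.

Lemma sig_Phi (V : finType) (h : rel (V * bool)) M : sig h (Phi h M) = sig h M.
Proof. by rewrite /sig projset_Phi. Qed.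

Lemma PhiK (V : finType) (s : {ffun V -> bool}) (M : {set {set V * bool}}) :
  swset s @: (swset s @: M) = M.
Proof.
rewrite -imset_comp -[RHS]imset_id; apply: eq_imset => E /=.
by rewrite /swset -imset_comp -[RHS]imset_id; apply: eq_imset => w /=; rewrite sw_inv.
Qed.

Lemma Phi_inj (V : finType) (h : rel (V * bool)) : injective (Phi h).
Proof.
move=> M1 M2 e.
have es : sig h M1 = sig h M2 by rewrite -sig_Phi e sig_Phi.
have := @PhiK _ (sig h M1) M1; have := @PhiK _ (sig h M2) M2.
rewrite -/(Phi h M1) -/(Phi h M2) e es => -> //.
Qed.

Lemma card_Phi (V : finType) (h : rel (V * bool)) M : #|Phi h M| = #|M|.
Proof. by rewrite card_imset //; apply: imset_inj; apply: sw_inj. Qed.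

Lemma exists_good (V : finType) (g : rel V) (h : rel (V * bool))
  (Hbip : bipartite g) (Hh : simple_graph h) (Hl : two_lift g h) (M : {set {set V * bool}}) :
  matching h M -> exists s, goodV h (projset M) s.
Proof.
case/matchingP => H1 H2.
have [rho Hr] : exists rho, good_rho M rho.
  apply: (@KL V #|M| M (leqnn _)) => // E EM.
  by have [x [y [xy _ ->]]] := edgeP (H1 _ EM); exists x, y.
case: Hbip => c Hc.
exists [ffun u => rho u (+) c u].
apply/forall_inP => F /imsetP [E EM ->]; apply/forall_inP => u /imsetP [x xE ->].
apply/forall_inP => v /imsetP [y yE ->]; apply/implyP => ne.
have xy : x != y by apply: contraNneq ne => ->.
have [p [q [pq hpq Ed]]] := edgeP (H1 _ EM).
have hxy : h x y.
  rewrite Ed in xE yE; case: (in_pair_cases xE yE xy) => -[-> ->] //.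
  by rewrite (proj1 Hh).
rewrite !ffunE (lift_cross Hl _ _ hxy).
have := Hr _ EM _ _ xE yE xy; have := Hc _ _ (lift_g Hl _ _ hxy).
by case: (rho x.1); case: (rho y.1); case: (c x.1); case: (c y.1); case: (x.2); case: (y.2).
Qed.

Lemma sig_good (V : finType) (g : rel V) (h : rel (V * bool))
  (Hbip : bipartite g) (Hh : simple_graph h) (Hl : two_lift g h) (M : {set {set V * bool}}) :
  matching h M -> goodV h (projset M) (sig h M).
Proof.
move=> mM; rewrite /sig; case: pickP => [s //|none].
by have [s hs] := @exists_good _ _ _ Hbip Hh Hl _ mM; rewrite none in hs.
Qed.

Lemma Phi_matching (V : finType) (g : rel V) (h : rel (V * bool))
  (Hg : simple_graph g) (Hbip : bipartite g) (Hh : simple_graph h) (Hl : two_lift g h)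
  (M : {set {set V * bool}}) :
  matching h M -> matching (dunion g) (Phi h M).
Proof.
move=> mM; have G := @sig_good _ _ _ Hbip Hh Hl _ mM.
rewrite /Phi; move: G; set s := sig h M => G.
case/matchingP: mM => H1 H2.
apply: matchingI.
- move=> E' /imsetP [E EM ->]; have [p [q [pq hpq Ed]]] := edgeP (H1 _ EM).
  rewrite /swset Ed imsetU1 imset_set1; apply: edgeI.
    by rewrite (inj_eq (@sw_inj V s)).
  have gpq := lift_g Hl _ _ hpq.
  have p1q1 : p.1 != q.1 by apply: contraTneq gpq => ->; rewrite (negbTE (proj2 Hg _)).
  have FM : proj [set p; q] \in projset M by rewrite -Ed; apply: imset_f.
  have pF : p.1 \in proj [set p; q] by apply: imset_f; rewrite !inE eqxx.
  have qF : q.1 \in proj [set p; q] by apply: imset_f; rewrite !inE eqxx orbT.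
  move: G => /forall_inP /(_ _ FM) /forall_inP /(_ _ pF) /forall_inP /(_ _ qF) /implyP /(_ p1q1) /eqP.
  rewrite (lift_cross Hl _ _ hpq) /dunion /sw /= gpq /=.
  by case: (s p.1); case: (s q.1); case: (p.2); case: (q.2).
- move=> E1' E2' /imsetP [E1 E1M ->] /imsetP [E2 E2M ->] ne.
  have ne' : E1 != E2 by apply: contraNneq ne => ->.
  have := H2 _ _ E1M E2M ne'; rewrite -!setI_eq0 /swset -imsetI; last by move=> ? ? _ _; apply: sw_inj.
  by move/eqP->; rewrite imset0.
Qed.

Definition layer {V : finType} (l : bool) (E : {set V * bool}) : bool := [forall w in E, w.2 == l].
Definition projl {V : finType} (l : bool) (D : {set {set V * bool}}) : {set {set V}} :=
  proj @: [set E in D | layer l E].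
Definition liftl {V : finType} (l : bool) (F : {set V}) : {set V * bool} :=
  (fun x => (x, l)) @: F.
Definition Lam {V : finType} (p : {set {set V}} * {set {set V}}) : {set {set V * bool}} :=
  (liftl false @: p.1) :|: (liftl true @: p.2).
Definition Psi {V : finType} (D : {set {set V * bool}}) := (projl false D, projl true D).

Lemma liftK {V : finType} {l : bool} {E : {set V * bool}} : layer l E -> liftl l (proj E) = E.
Proof.
move=> H; rewrite /liftl /proj -imset_comp -[RHS]imset_id; apply: eq_in_imset => w wE /=.
by move/forall_inP: H => /(_ _ wE) /eqP <-; case: w {wE}.
Qed.

Lemma dedge_layer {V : finType} {g : rel V} {E : {set V * bool}} :
  is_edge (dunion g) E -> layer false E || layer true E.
Proof.
case/edgeP => x [y [_ /andP [_ /eqP e] ->]].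
have : layer x.2 [set x; y] by apply/forall_inP => w; rewrite !inE => /orP[]/eqP->; rewrite ?e eqxx.
by case: (x.2) => ->; rewrite ?orbT.
Qed.

Lemma layer_excl (V : finType) (E : {set V * bool}) (w : V * bool) :
  w \in E -> ~~ (layer false E && layer true E).
Proof.
move=> wE; apply/negP => /andP [/forall_inP /(_ _ wE) /eqP h1 /forall_inP /(_ _ wE) /eqP h2].
by rewrite h1 in h2.
Qed.

Lemma LamK {V : finType} {g : rel V} {D : {set {set V * bool}}} :
  matching (dunion g) D -> Lam (Psi D) = D.
Proof.
case/matchingP => H1 _.
rewrite /Lam /Psi /projl /= -!imset_comp.
rewrite (eq_in_imset (g := fun x => x)); last by move=> E; rewrite inE => /andP [_ L]; apply: liftK.
rewrite [X in _ :|: X](eq_in_imset (g := fun x => x)); last first.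
  by move=> E; rewrite inE => /andP [_ L]; apply: liftK.
rewrite !imset_id; apply/setP => E; rewrite !inE.
case ED: (E \in D) => //=.
exact: dedge_layer (H1 _ ED).
Qed.

Lemma Psi_matching (V : finType) (g : rel V) (Hg : simple_graph g) (l : bool)
  (D : {set {set V * bool}}) :
  matching (dunion g) D -> matching g (projl l D).
Proof.
case/matchingP => H1 H2; apply: matchingI.
- move=> F /imsetP [E]; rewrite inE => /andP [ED _] ->.
  have [x [y [_ /andP [gxy _] ->]]] := edgeP (H1 _ ED).
  rewrite /proj imsetU1 imset_set1; apply: edgeI => //.
  by apply: contraTneq gxy => ->; rewrite (negbTE (proj2 Hg _)).
- move=> F1 F2 /imsetP [E1]; rewrite inE => /andP [E1D L1] -> /imsetP [E2]; rewrite inE => /andP [E2D L2] -> ne.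
  have ne' : E1 != E2 by apply: contraNneq ne => ->.
  have Dis := H2 _ _ E1D E2D ne'.
  rewrite -setI_eq0; apply/eqP/setP => u; rewrite !inE; apply/negbTE/negP.
  case/andP => /imsetP [w1 w1E ->] /imsetP [w2 w2E e].
  have e2 : w1.2 = w2.2.
    by move/forall_inP: L1 => /(_ _ w1E) /eqP ->; move/forall_inP: L2 => /(_ _ w2E) /eqP ->.
  have ew : w1 = w2 by case: w1 w2 e e2 {w1E w2E} => ? ? [? ?] /= -> ->.
  by rewrite -ew (disjointFr Dis w1E) in w2E.
Qed.

Lemma card_Psi {V : finType} {g : rel V} {D : {set {set V * bool}}} :
  matching (dunion g) D -> #|projl false D| + #|projl true D| = #|D|.
Proof.
case/matchingP => H1 _.
have inj : forall l, {in [set E in D | layer l E] &, injective (@proj V)}.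
  move=> l E1 E2; rewrite !inE => /andP [_ L1] /andP [_ L2] e.
  by rewrite -(liftK L1) -(liftK L2) e.
rewrite /projl !card_in_imset; try exact: inj.
rewrite -(cardsID [set E | layer false E] D); congr (_ + _); apply: eq_card => E; rewrite !inE.
  by rewrite andbC.
case ED: (E \in D); rewrite /= ?andbF //.
have [x [y [_ _ Ed]]] := edgeP (H1 _ ED).
have := dedge_layer (H1 _ ED); have := @layer_excl V E x; rewrite Ed !inE eqxx => /(_ isT).
rewrite -Ed; case: (layer false E); case: (layer true E) => //.
Qed.

Theorem lemma4p2 (V : finType) (g : rel V) (h : rel (V * bool))
  (Hg : simple_graph g) (Hbip : bipartite g)
  (Hh : simple_graph h) (Hlift : two_lift g h) :
  (forall k : nat, mk h k <= mk (dunion g) k)%N /\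
  (forall (R : realFieldType) (t : R), (0 <= t)%R ->
     (matchpoly h t <= matchpoly g t ^+ 2)%R).
Proof.
split.
  move=> k; rewrite /mk -(card_imset _ (@Phi_inj V h)).
  apply: subset_leq_card; apply/subsetP => D' /imsetP [M]; rewrite inE => /andP [mM /eqP ck] ->.
  by rewrite inE (@Phi_matching _ _ _ Hg Hbip Hh Hlift _ mM) card_Phi ck eqxx.
move=> R t t0; rewrite !mp_sum.
apply: (@le_trans _ _ (\sum_(D | matching (dunion g) D) t ^+ #|D|)%R).
  rewrite (eq_bigr (fun M => t ^+ #|Phi h M|)%R); last by move=> M _; rewrite card_Phi.
  apply: (@sum_inj_le R _ _ _ _ (Phi h) (fun D : {set {set V * bool}} => (t ^+ #|D|)%R)).
  - by move=> M1 M2 _ _; apply: Phi_inj.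
  - by move=> M mM; apply: (@Phi_matching _ _ _ Hg Hbip Hh Hlift).
  - by move=> D; apply: exprn_ge0.
rewrite (eq_bigr (fun D => t ^+ #|(Psi D).1| * t ^+ #|(Psi D).2|)%R); last first.
  by move=> D mD; rewrite -exprD /= (card_Psi mD).
rewrite expr2 big_distrlr /= pair_big_dep /=.
apply: (@sum_inj_le R _ _ _ _ (@Psi V) (fun p : {set {set V}} * {set {set V}} => (t ^+ #|p.1| * t ^+ #|p.2|)%R)).
- by apply: (@can_in_inj _ _ _ _ (@Lam V)) => D mD; apply: (LamK mD).
- by move=> D mD /=; rewrite !(@Psi_matching _ _ Hg).
- by move=> p; rewrite mulr_ge0 // exprn_ge0.
Qed.
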